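(* Let $k$ be a field of characteristic $0$, $B$ a $k$-algebra, $A$ a $B$-algebra equipped with a $B$-linear double bracket $\{\!\{-,-\}\!\}$, and let $e\in B$ be an idempotent with $BeB=B$. Write $1=\sum_ip_ieq_i$ with $p_i,q_i\in B$ and define $\operatorname{Tr}:A\to eAe$, $\operatorname{Tr}(a)=\sum_ieq_iap_ie$. Then for all $a,b\in A$, \[\operatorname{Tr}\{a,b\}=\{\operatorname{Tr}(a),\operatorname{Tr}(b)\},\] where $\{x,y\}=\{\!\{x,y\}\!\}'\{\!\{x,y\}\!\}''$ is the associated bracket.
   Context: A $B$-algebra is a $k$-algebra $A$ with a $k$-algebra map $B\to A$. Unadorned tensor products are over $k$; $x\in A\otimes A$ is written $x'\otimes x''$ (summation suppressed), $x^\circ=x''\otimes x'$. A double bracket on $A$ is a bilinear map $\{\!\{-,-\}\!\}:A\times A\to A\otimes A$ with $\{\!\{a,bc\}\!\}=b\{\!\{a,c\}\!\}+\{\!\{a,b\}\!\}c$ (outer bimodule structure $b(x\otimes y)c=bx\otimes yc$) and $\{\!\{a,b\}\!\}=-\{\!\{b,a\}\!\}^\circ$; it is $B$-linear if it vanishes whenever its second argument lies in the image of $B$. *)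

(* Defs.v *)
From HB Require Import structures.
From mathcomp Require Import all_boot all_order all_algebra.
Set Implicit Arguments. Unset Strict Implicit. Unset Printing Implicit Defensive.
Import GRing.Theory.
Local Open Scope ring_scope.

Definition bilinear_map (k : fieldType) (U V : lmodType k) (f : U -> U -> V) :=
  (forall x, linear (f x)) /\ (forall y, linear (fun x => f x y)).

(* A tensor product U (x)_k U over the field k, given by its universal
   property: a k-vector space carrier with a bilinear map tens, such that every
   bilinear map out of U x U factors uniquely through a linear map (tp_lift). *)
Record tensor_square (k : fieldType) (U : lmodType k) := TensorSquare {
  tp_carrier :> lmodType k;
  tp_tens : U -> U -> tp_carrier;
  tp_tens_bilinear : bilinear_map tp_tens;
  tp_lift : forall V : lmodType k, (U -> U -> V) -> tp_carrier -> V;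
  tp_lift_linear : forall (V : lmodType k) (f : U -> U -> V),
      bilinear_map f -> linear (tp_lift f);
  tp_lift_tens : forall (V : lmodType k) (f : U -> U -> V),
      bilinear_map f -> forall x y, tp_lift f (tp_tens x y) = f x y;
  tp_lift_unique : forall (V : lmodType k) (f : U -> U -> V) (g : tp_carrier -> V),
      bilinear_map f -> linear g -> (forall x y, g (tp_tens x y) = f x y) ->
      forall t, g t = tp_lift f t
}.

Section TensorOps.
Variables (k : fieldType) (A : algType k) (T : tensor_square A).

Definition tmul (t : T) : A := tp_lift (fun x y : A => x * y) t.
Definition tflip (t : T) : T := tp_lift (fun x y : A => tp_tens T y x) t.
Definition touter (b : A) (t : T) (c : A) : T :=
  tp_lift (fun x y : A => tp_tens T (b * x) (y * c)) t.

Definition double_bracket (dbr : A -> A -> T) :=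
  [/\ bilinear_map dbr,
      (forall a b c, dbr a (b * c) = touter b (dbr a c) 1 + touter 1 (dbr a b) c) &
      (forall a b, dbr a b = - tflip (dbr b a))].

Definition B_linear_dbr (B : algType k) (f : B -> A) (dbr : A -> A -> T) :=
  forall a (b : B), dbr a (f b) = 0.

Definition assoc_bracket (dbr : A -> A -> T) (x y : A) : A := tmul (dbr x y).

End TensorOps.

Definition Tr (k : fieldType) (B A : algType k) (f : B -> A) (e : B)
  (n : nat) (p q : 'I_n -> B) (a : A) : A :=
  \sum_(i < n) f (e * q i) * a * f (p i * e).

(* Main.v *)
Require Import Defs.
From HB Require Import structures.
From mathcomp Require Import all_boot all_order all_algebra.
Import GRing.Theory.
Local Open Scope ring_scope.
Set Implicit Arguments. Unset Strict Implicit. Unset Printing Implicit Defensive.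

Section Lin.
Variables (k : fieldType).

Lemma lin_D (U V : lmodType k) (g : U -> V) : linear g -> forall x y, g (x + y) = g x + g y.
Proof. by move=> Lg x y; have := Lg 1 x y; rewrite !scale1r. Qed.

Lemma lin_0 (U V : lmodType k) (g : U -> V) : linear g -> g 0 = 0.
Proof. by move=> Lg; have := zmod_morphism_linear Lg 0 0; rewrite !subrr. Qed.

Lemma lin_N (U V : lmodType k) (g : U -> V) : linear g -> forall x, g (- x) = - g x.
Proof. by move=> Lg x; have := zmod_morphism_linear Lg 0 x; rewrite sub0r (lin_0 Lg) sub0r. Qed.

Lemma lin_sum (U V : lmodType k) (g : U -> V) n (F : 'I_n -> U) : linear g ->
  g (\sum_(i < n) F i) = \sum_(i < n) g (F i).
Proof. by move=> Lg; apply: (big_morph g (lin_D Lg) (lin_0 Lg)). Qed.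

Lemma lin_comp (U V W : lmodType k) (g : V -> W) (h : U -> V) :
  linear g -> linear h -> linear (fun x => g (h x)).
Proof. by move=> Lg Lh a x y; rewrite Lh Lg. Qed.

Lemma lin_sumf (U V : lmodType k) n (G : 'I_n -> U -> V) :
  (forall i, linear (G i)) -> linear (fun x => \sum_(i < n) G i x).
Proof.
move=> LG a x y; rewrite scaler_sumr -big_split /=.
by apply: eq_bigr => i _; rewrite LG.
Qed.
End Lin.

Section Tens.
Variables (k : fieldType) (A : algType k) (T : tensor_square A).

Lemma linmul (u v : A) : linear (fun x : A => u * x * v).
Proof. by move=> a x y; rewrite mulrDr mulrDl -scalerAr -scalerAl. Qed.

Lemma bil_tens (l1 l2 : A -> A) : linear l1 -> linear l2 ->
  bilinear_map (fun x y => tp_tens T (l1 x) (l2 y)).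
Proof.
case: (tp_tens_bilinear T) => b1 b2 L1 L2; split.
- by move=> x; apply: (lin_comp (b1 _) L2).
- by move=> y; apply: (lin_comp (b2 _) L1).
Qed.

Lemma ext (V : lmodType k) (g h : T -> V) : linear g -> linear h ->
  (forall x y, g (tp_tens T x y) = h (tp_tens T x y)) -> forall t, g t = h t.
Proof.
move=> Lg Lh E t.
have bF : bilinear_map (fun x y => g (tp_tens T x y)).
  case: (tp_tens_bilinear T) => b1 b2; split.
  - by move=> x; apply: (lin_comp Lg (b1 _)).
  - by move=> y; apply: (lin_comp Lg (b2 _)).
rewrite (tp_lift_unique bF Lg) // (tp_lift_unique bF Lh) //.
Qed.

Definition Mg (u v w z : A) (t : T) : T :=
  tp_lift (fun x y : A => tp_tens T (u * x * v) (w * y * z)) t.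

Lemma Mg_bil u v w z : bilinear_map (fun x y : A => tp_tens T (u * x * v) (w * y * z)).
Proof. exact: (bil_tens (linmul u v) (linmul w z)). Qed.

Lemma Mg_lin u v w z : linear (Mg u v w z).
Proof. exact: (tp_lift_linear (Mg_bil u v w z)). Qed.

Lemma Mg_tens u v w z x y : Mg u v w z (tp_tens T x y) = tp_tens T (u * x * v) (w * y * z).
Proof. rewrite /Mg tp_lift_tens //; exact: Mg_bil. Qed.

Lemma tflip_bil : bilinear_map (fun x y : A => tp_tens T y x).
Proof. case: (tp_tens_bilinear T) => b1 b2; split; [exact: b2 | exact: b1]. Qed.

Lemma tflip_lin : linear (tflip (T:=T)).
Proof. exact: (tp_lift_linear tflip_bil). Qed.

Lemma tflip_tens x y : tflip (tp_tens T x y) = tp_tens T y x.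
Proof. rewrite /tflip tp_lift_tens //; exact: tflip_bil. Qed.

Lemma tmul_bil : bilinear_map (fun x y : A => x * y).
Proof.
split.
- by move=> x a y z; rewrite mulrDr scalerAr.
- by move=> y a x z /=; rewrite mulrDl scalerAl.
Qed.

Lemma tmul_lin : linear (tmul (T:=T)).
Proof. exact: (tp_lift_linear tmul_bil). Qed.

Lemma tmul_tens x y : tmul (tp_tens T x y) = x * y.
Proof. rewrite /tmul tp_lift_tens //; exact: tmul_bil. Qed.

Lemma touter_bil b c : bilinear_map (fun x y : A => tp_tens T (b * x) (y * c)).
Proof.
have L1 : linear (fun x : A => b * x) by move=> a x y; rewrite mulrDr -scalerAr.
have L2 : linear (fun x : A => x * c) by move=> a x y; rewrite mulrDl -scalerAl.
exact: (bil_tens L1 L2).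
Qed.

Lemma touterE b t c : touter b t c = Mg b 1 1 c t.
Proof.
apply: (ext (g := fun t => touter b t c)) => //.
- exact: (tp_lift_linear (touter_bil b c)).
- exact: Mg_lin.
- by move=> x y; rewrite Mg_tens /touter tp_lift_tens ?mulr1 ?mul1r //; exact: touter_bil.
Qed.

Lemma flipMg u v w z t : tflip (Mg u v w z (tflip t)) = Mg w z u v t.
Proof.
apply: (ext (g := fun t => tflip (Mg u v w z (tflip t)))).
- exact: (lin_comp tflip_lin (lin_comp (Mg_lin _ _ _ _) tflip_lin)).
- exact: Mg_lin.
- by move=> x y; rewrite tflip_tens Mg_tens tflip_tens Mg_tens.
Qed.
End Tens.

Theorem proposition2p5p7 (k : fieldType) (hchar : [pchar k] =i pred0)
  (B A : algType k) (f : {lrmorphism B -> A})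
  (T : tensor_square A) (dbr : A -> A -> T)
  (hdbr : double_bracket dbr) (hBlin : B_linear_dbr f dbr)
  (e : B) (he : e * e = e)
  (n : nat) (p q : 'I_n -> B) (hpq : \sum_(i < n) p i * e * q i = 1) :
  forall a b : A,
    Tr f e p q (assoc_bracket dbr a b)
    = assoc_bracket dbr (Tr f e p q a) (Tr f e p q b).
Proof.
case: hdbr => [[dl1 dl2] Leib skew] a b.
have RL : forall X Y c, dbr X (f c * Y) = Mg (f c) 1 1 1 (dbr X Y).
  move=> X Y c; rewrite Leib hBlin !touterE (lin_0 (Mg_lin _ _ _ _)) addr0.
  by [].
have RR : forall X Y c, dbr X (Y * f c) = Mg 1 1 1 (f c) (dbr X Y).
  move=> X Y c; rewrite Leib hBlin !touterE (lin_0 (Mg_lin _ _ _ _)) add0r.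
  by [].
have LL : forall X Y c, dbr (f c * X) Y = Mg 1 1 (f c) 1 (dbr X Y).
  move=> X Y c; rewrite skew RL [dbr Y X]skew.
  by rewrite (lin_N (Mg_lin _ _ _ _)) (lin_N (@tflip_lin _ _ _)) opprK flipMg.
have LR : forall X Y c, dbr (X * f c) Y = Mg 1 (f c) 1 1 (dbr X Y).
  move=> X Y c; rewrite skew RR [dbr Y X]skew.
  by rewrite (lin_N (Mg_lin _ _ _ _)) (lin_N (@tflip_lin _ _ _)) opprK flipMg.
rewrite /assoc_bracket /Tr.
have E2 : forall X, dbr X (\sum_(j < n) f (e * q j) * b * f (p j * e)) =
   \sum_(j < n) Mg 1 1 1 (f (p j * e)) (Mg (f (e * q j)) 1 1 1 (dbr X b)).
  by move=> X; rewrite (lin_sum _ (dl1 _)); apply: eq_bigr => j _; rewrite RR RL.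
have E1 : dbr (\sum_(i < n) f (e * q i) * a * f (p i * e)) b =
   \sum_(i < n) Mg 1 (f (p i * e)) 1 1 (Mg 1 1 (f (e * q i)) 1 (dbr a b)).
  by rewrite (lin_sum _ (dl2 _)); apply: eq_bigr => j _; rewrite LR LL.
rewrite E2 E1.
move: (dbr a b) => t.
pose u i := f (e * q i); pose v i := f (p i * e).
have S : \sum_(i < n) v i * u i = 1.
  rewrite /u /v -(rmorph1 f) -hpq rmorph_sum; apply: eq_bigr => i _.
  by rewrite -rmorphM !mulrA -(mulrA (p i) e e) he.
apply: (ext (g := fun t => \sum_(i < n) u i * tmul t * v i)
  (h := fun t => tmul (\sum_(j < n) Mg 1 1 1 (v j) (Mg (u j) 1 1 1
             (\sum_(i < n) Mg 1 (v i) 1 1 (Mg 1 1 (u i) 1 t)))))).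
- apply: lin_sumf => i; exact: (lin_comp (linmul _ _) (@tmul_lin _ _ _)).
- apply: (lin_comp (@tmul_lin _ _ _)); apply: lin_sumf => j.
  apply: (lin_comp (Mg_lin _ _ _ _)); apply: (lin_comp (Mg_lin _ _ _ _)).
  apply: lin_sumf => i; exact: (lin_comp (Mg_lin _ _ _ _) (Mg_lin _ _ _ _)).
move=> x y /=.
rewrite (lin_sum _ (@tmul_lin _ _ _)); apply: eq_bigr => j _.
rewrite (lin_sum _ (Mg_lin _ _ _ _)) (lin_sum _ (Mg_lin _ _ _ _)).
rewrite (lin_sum _ (@tmul_lin _ _ _)).
under eq_bigr => i _ do rewrite !Mg_tens tmul_tens !mul1r !mulr1.
rewrite tmul_tens.
have -> : \sum_(i < n) u j * (x * v i) * (u i * y * v j)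
   = u j * x * (\sum_(i < n) v i * u i) * (y * v j).
  rewrite big_distrr big_distrl /=; apply: eq_bigr => i _; rewrite !mulrA //.
by rewrite S mulr1 !mulrA.
Qed.
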